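(* Let $A>0$, $B\in\mathbb{R}$, $R>0$ with $0<4|B|R<\pi$, and $a_1(k)=1+\frac{A^2e^{4\mathrm{i} kR}}{4(k^2-B^2)}$. Let $\varphi$ denote the argument of $a_1$ defined as below. Then: 1) If $0<R<\frac{\pi}{2(4B^2+A^2)^{1/2}}$: $\varphi(k)\in(-\pi,\pi)$ for $k\in(-\infty,-|B|)$; $\lim_{k\uparrow-|B|}\varphi(k)=-\theta_{-|B|}$ with $\theta_{-|B|}\in(0,\pi)$; $\lim_{k\downarrow-|B|}\varphi(k)=\pi-\theta_{-|B|}$; and $\varphi(k)\in(0,\pi)$ for $k\in(-|B|,0)$. 2) If $\frac{(2n-1)\pi}{2(4B^2+A^2)^{1/2}}<R<\frac{(2n+1)\pi}{2(4B^2+A^2)^{1/2}}$ for some $n\in\mathbb{N}$, then with $\omega_{n+1}=-\infty$, $\omega_j=-\frac{(2j-1)\pi}{4R}$ ($j=1,\dots,n$), $\omega_0=-|B|$: $\varphi(\omega_{n-j+1})=(2j-1)\pi$ for $j=1,\dots,n$; $\varphi(k)\in(2\pi j-\pi,2\pi j+\pi)$ for $k\in(\omega_{n-j+1},\omega_{n-j})$, $j=0,\dots,n$; $\lim_{k\uparrow-|B|}\varphi(k)=2\pi n-\theta_{-|B|}$ with $\theta_{-|B|}\in(0,\pi)$; $\lim_{k\downarrow-|B|}\varphi(k)=2\pi n+\pi-\theta_{-|B|}$; and $\varphi(k)\in(2\pi n,2\pi n+\pi)$ for $k\in(-|B|,0)$. 3) $\lim_{k\uparrow0}\varphi(k)$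 equals: if $4B^2-A^2>0$, $0$ when $0<R<\frac{\pi}{2(4B^2+A^2)^{1/2}}$ and $2\pi n$ when $\frac{(2n-1)\pi}{2(4B^2+A^2)^{1/2}}<R<\frac{(2n+1)\pi}{2(4B^2+A^2)^{1/2}}$; if $4B^2-A^2<0$, $\pi$ when $0<R<\frac{\pi}{2(4B^2+A^2)^{1/2}}$ and $2\pi n+\pi$ when $\frac{(2n-1)\pi}{2(4B^2+A^2)^{1/2}}<R<\frac{(2n+1)\pi}{2(4B^2+A^2)^{1/2}}$.
   Context: $\varphi$ is the continuous branch of $\arg a_1(k)$ along the path that runs over the real axis from $-\infty$ to $0$, except that it bypasses the pole $k=-|B|$ along a small semicircle in the upper half-plane, normalized by $\varphi(k)\to0$ as $k\to-\infty$ (under the hypotheses $a_1$ does not vanish on this path). For $k\in(-\infty,0)\setminus\{-|B|\}$, $\varphi(k)$ is its value at the real point $k$. (In the paper this quantity is written as $\int_{-\infty}^kd\arg a_1$, and for $k>-|B|$ as $\int_{-|B|}^k d\arg a_1$.) *)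

(* Defs.v *)
From Stdlib Require Import Reals Lra.
From Coquelicot Require Import Coquelicot.
Open Scope R_scope.

Definition cexp (z : C) : C :=
  (exp (Re z) * cos (Im z), exp (Re z) * sin (Im z)).

Definition a1 (A B RR : R) (k : C) : C :=
  Cplus 1 (Cdiv (Cmult (RtoC (A ^ 2)) (cexp (Cmult (Cmult (RtoC 4) Ci) (Cmult k (RtoC RR)))))
                (Cmult (RtoC 4) (Cminus (Cmult k k) (RtoC (B ^ 2))))).

Definition is_arg (z : C) (t : R) : Prop :=
  z <> RtoC 0 /\ Re z = Cmod z * cos t /\ Im z = Cmod z * sin t.

(* the small upper semicircle around -|B| of radius eps, run from
   -|B|-eps (t = 0) to -|B|+eps (t = PI):  -|B| + eps e^{i(PI - t)} *)
Definition semicircle (B eps t : R) : C :=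
  (- Rabs B + eps * cos (PI - t), eps * sin (PI - t)).

(* phi is (the restriction to the real points of) the continuous branch of
   arg a_1 along the path (-oo,0) that bypasses the pole -|B| along a small
   semicircle in the upper half-plane, normalized by phi -> 0 at -oo. *)
Definition is_phi (A B RR : R) (phi : R -> R) : Prop :=
  (forall k, k < - Rabs B ->
     is_arg (a1 A B RR (RtoC k)) (phi k) /\ continuous phi k) /\
  (forall k, - Rabs B < k < 0 ->
     is_arg (a1 A B RR (RtoC k)) (phi k) /\ continuous phi k) /\
  filterlim phi (Rbar_locally m_infty) (locally 0) /\
  (exists eps0, 0 < eps0 <= Rabs B /\
     forall eps, 0 < eps < eps0 ->
       exists psi : R -> R,
         (forall t, 0 <= t <= PI ->
            is_arg (a1 A B RR (semicircle B eps t)) (psi t) /\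
            filterlim psi (within (fun u => 0 <= u <= PI) (locally t)) (locally (psi t))) /\
         psi 0 = phi (- Rabs B - eps) /\
         psi PI = phi (- Rabs B + eps)).

Definition omega (B RR : R) (n j : nat) : Rbar :=
  if Nat.eqb j 0 then Finite (- Rabs B)
  else if Nat.ltb n j then m_infty
  else Finite (- (2 * INR j - 1) * PI / (4 * RR)).

Definition Rcrit (A B : R) : R := 2 * sqrt (4 * B ^ 2 + A ^ 2).

(* Main.v *)
Require Import Defs.
From Stdlib Require Import Reals Lra Lia ZArith.
From Coquelicot Require Import Coquelicot.
Open Scope R_scope.


Definition clamp (a b x : R) := Rmax a (Rmin b x).

Lemma ball_R (x e y : R) : ball x e y <-> Rabs (y - x) < e.
Proof. reflexivity. Qed.

Lemma clamp_in a b x : a <= b -> a <= clamp a b x <= b.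
Proof. intros; unfold clamp, Rmax, Rmin; repeat destruct Rle_dec; lra. Qed.

Lemma clamp_id a b x : a <= x <= b -> clamp a b x = x.
Proof. intros; unfold clamp, Rmax, Rmin; repeat destruct Rle_dec; lra. Qed.

Lemma clamp_lip a b x y : a <= b -> Rabs (clamp a b y - clamp a b x) <= Rabs (y - x).
Proof. intros; unfold clamp, Rmax, Rmin; repeat destruct Rle_dec;
  unfold Rabs; repeat destruct Rcase_abs; lra. Qed.

Lemma no_cross (f : R -> R) a b y :
  a <= b ->
  (forall t, a <= t <= b -> filterlim f (within (fun u => a <= u <= b) (locally t)) (locally (f t))) ->
  (forall t, a <= t <= b -> f t <> y) ->
  f a < y -> f b < y.
Proof.
  intros hab hc hy ha.
  destruct (Rlt_le_dec (f b) y) as [h|h]; [exact h|].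
  exfalso.
  set (g := fun x => f (clamp a b x)).
  assert (gc : continuity g).
  { intro x. apply continuity_pt_filterlim. unfold g.
    apply (filterlim_comp _ _ _ (clamp a b) f (locally x)
             (within (fun u => a <= u <= b) (locally (clamp a b x)))).
    - intros P [eps He]. exists eps. intros u Hu. apply He.
      + apply ball_R. apply ball_R in Hu. eapply Rle_lt_trans. apply clamp_lip; lra. exact Hu.
      + apply clamp_in; lra.
    - apply hc. apply clamp_in; lra. }
  destruct (IVT_gen g a b y gc) as [x [hx1 hx2]].
  { unfold g; rewrite !clamp_id by lra. unfold Rmin, Rmax; repeat destruct Rle_dec; lra. }
  unfold Rmin, Rmax in hx1; repeat destruct Rle_dec in hx1; try lra.
  unfold g in hx2; rewrite clamp_id in hx2 by lra. apply (hy x); lra.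
Qed.

Lemma no_cross' (f : R -> R) a b y :
  a <= b ->
  (forall t, a <= t <= b -> filterlim f (within (fun u => a <= u <= b) (locally t)) (locally (f t))) ->
  (forall t, a <= t <= b -> f t <> y) ->
  f a > y -> f b > y.
Proof.
  intros hab hc hy ha.
  assert (H := no_cross (fun x => - f x) a b (- y) hab).
  cut (- f b < - y). lra.
  apply H; [| intros t ht e; apply (hy t ht); lra | lra].
  intros t ht. apply (filterlim_comp _ _ _ f Ropp _ (locally (f t))). auto.
  apply continuity_pt_filterlim. apply continuity_pt_opp. apply continuity_pt_id.
Qed.

Lemma no_cross_open (f : R -> R) (P : R -> Prop) y k1 k2 :
  (forall k, k1 <= k <= k2 -> P k) ->
  (forall k, P k -> continuous f k) ->
  (forall k, P k -> f k <> y) ->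
  k1 <= k2 -> (f k1 < y <-> f k2 < y).
Proof.
  intros hP hc hy h12.
  assert (hw : forall t, k1 <= t <= k2 ->
     filterlim f (within (fun u => k1 <= u <= k2) (locally t)) (locally (f t))).
  { intros t ht. eapply filterlim_filter_le_1. apply filter_le_within. apply hc, hP, ht. }
  split; intro h.
  - apply (no_cross f k1 k2 y h12 hw); auto.
  - destruct (Rlt_le_dec (f k1) y) as [h'|h']; auto. exfalso.
    assert (f k1 > y). { destruct (Req_dec (f k1) y). exfalso; apply (hy k1); auto; apply hP; lra. lra. }
    assert (f k2 > y). apply (no_cross' f k1 k2 y h12 hw); auto. lra.
Qed.

Lemma same_side (f : R -> R) (P : R -> Prop) y k1 k2 :
  (forall k, Rmin k1 k2 <= k <= Rmax k1 k2 -> P k) ->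
  (forall k, P k -> continuous f k) ->
  (forall k, P k -> f k <> y) ->
  (f k1 < y <-> f k2 < y).
Proof.
  intros hP hc hy. destruct (Rle_dec k1 k2).
  - apply (no_cross_open f P); auto. intros k hk; apply hP; unfold Rmin, Rmax; destruct Rle_dec; lra.
  - symmetry. apply (no_cross_open f P); try lra; auto. intros k hk; apply hP; unfold Rmin, Rmax; destruct Rle_dec; lra.
Qed.


Lemma sin_perZ x q : sin (x + 2 * IZR q * PI) = sin x.
Proof.
  destruct (Z_le_gt_dec 0 q) as [h|h].
  - rewrite <- (Z2Nat.id q) by lia. rewrite <- INR_IZR_INZ. apply sin_period.
  - replace x with ((x + 2 * IZR q * PI) + 2 * INR (Z.to_nat (- q)) * PI) at 2.
    + now rewrite sin_period.
    + rewrite INR_IZR_INZ, Z2Nat.id by lia. rewrite opp_IZR. ring.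
Qed.

Lemma cos_perZ x q : cos (x + 2 * IZR q * PI) = cos x.
Proof.
  destruct (Z_le_gt_dec 0 q) as [h|h].
  - rewrite <- (Z2Nat.id q) by lia. rewrite <- INR_IZR_INZ. apply cos_period.
  - replace x with ((x + 2 * IZR q * PI) + 2 * INR (Z.to_nat (- q)) * PI) at 2.
    + now rewrite cos_period.
    + rewrite INR_IZR_INZ, Z2Nat.id by lia. rewrite opp_IZR. ring.
Qed.

Lemma red_arg x : exists q : Z, 2 * PI * IZR q - PI < x <= 2 * PI * IZR q + PI.
Proof.
  assert (hp := PI_RGT_0).
  destruct (archimed ((PI - x) / (2 * PI))) as [h1 h2].
  exists (1 - up ((PI - x) / (2 * PI)))%Z. rewrite minus_IZR.
  set (v := (PI - x) / (2 * PI)) in *.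
  set (u := IZR (up v)) in *.
  assert (e : v * (2*PI) = PI - x) by (unfold v; field; lra).
  assert (2*PI*u > 2*PI*v) by (apply Rmult_gt_compat_l; lra).
  assert (2*PI*(u - v) <= 2*PI*1) by (apply Rmult_le_compat_l; lra).
  split; lra.
Qed.

Lemma sin_pos_strip t q : 2 * PI * IZR q - PI < t <= 2 * PI * IZR q + PI -> 0 < sin t ->
  2 * PI * IZR q < t < 2 * PI * IZR q + PI.
Proof.
  intros [h1 h2] hs.
  assert (e : sin t = sin (t - 2 * PI * IZR q)).
  { rewrite <- (sin_perZ (t - 2 * PI * IZR q) q). f_equal; ring. }
  rewrite e in hs. set (u := t - 2 * PI * IZR q) in *.
  destruct (Rlt_le_dec 0 u).
  - destruct (Rle_lt_or_eq_dec u PI) as [H|H]; [unfold u in *; lra | unfold u in *; lra |].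
    rewrite H, sin_PI in hs; lra.
  - destruct (Rle_lt_or_eq_dec u 0) as [H|H]; auto.
    assert (sin u < 0) by (apply sin_lt_0_var; unfold u in *; lra). lra. rewrite H, sin_0 in hs; lra.
Qed.

Lemma sin_neg_strip t q : 2 * PI * IZR q - PI < t <= 2 * PI * IZR q + PI -> sin t < 0 ->
  2 * PI * IZR q - PI < t < 2 * PI * IZR q.
Proof.
  intros [h1 h2] hs.
  assert (e : sin t = sin (t - 2 * PI * IZR q)).
  { rewrite <- (sin_perZ (t - 2 * PI * IZR q) q). f_equal; ring. }
  rewrite e in hs. set (u := t - 2 * PI * IZR q) in *.
  destruct (Rlt_le_dec u 0).
  - split; unfold u in *; lra.
  - destruct (Rle_lt_or_eq_dec u PI) as [H|H]; [unfold u in *; lra| |rewrite H, sin_PI in hs; lra].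
    destruct (Rle_lt_or_eq_dec 0 u) as [H'|H']; auto. 2: rewrite <- H', sin_0 in hs; lra.
    assert (0 < sin u) by (apply sin_gt_0; unfold u in *; lra). lra.
Qed.

Lemma cos_m1 t : cos t = -1 -> exists q : Z, t = PI + 2 * PI * IZR q.
Proof.
  intro hc. destruct (red_arg t) as [q [h1 h2]]. exists q.
  assert (e : cos t = cos (t - 2 * PI * IZR q)).
  { rewrite <- (cos_perZ (t - 2 * PI * IZR q) q). f_equal; ring. }
  rewrite e in hc. set (u := t - 2 * PI * IZR q) in *.
  destruct (Rle_lt_or_eq_dec u PI) as [H|H]; [unfold u in *; lra| |unfold u in *; lra].
  exfalso.
  assert (hc2 : cos (2 * (u/2)) = -1) by (replace (2*(u/2)) with u by field; auto).
  rewrite cos_2a_cos in hc2.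
  assert (0 < cos (u/2)) by (apply cos_gt_0; unfold u in *; lra). nra.
Qed.

Lemma cos_pos t : 0 < cos t -> exists q : Z, 2 * PI * IZR q - PI/2 < t < 2 * PI * IZR q + PI/2.
Proof.
  intro hc. destruct (red_arg t) as [q [h1 h2]]. exists q.
  assert (e : cos t = cos (t - 2 * PI * IZR q)).
  { rewrite <- (cos_perZ (t - 2 * PI * IZR q) q). f_equal; ring. }
  rewrite e in hc. set (u := t - 2 * PI * IZR q) in *.
  assert (hp := PI_RGT_0).
  destruct (Rlt_le_dec u (PI/2)).
  - destruct (Rlt_le_dec (-(PI/2)) u). unfold u in *; lra.
    assert (cos u <= 0). { rewrite <- cos_neg. apply cos_le_0; unfold u in *; lra. } lra.
  - assert (cos u <= 0) by (apply cos_le_0; unfold u in *; lra). lra.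
Qed.

Lemma cos_pi_2q q : cos (PI + 2 * PI * IZR q) = -1.
Proof. replace (PI + 2 * PI * IZR q) with (PI + 2 * IZR q * PI) by ring. now rewrite cos_perZ, cos_PI. Qed.
Lemma sin_pi_2q q : sin (PI + 2 * PI * IZR q) = 0.
Proof. replace (PI + 2 * PI * IZR q) with (PI + 2 * IZR q * PI) by ring. now rewrite sin_perZ, sin_PI. Qed.
Lemma cos_2q q : cos (2 * PI * IZR q) = 1.
Proof. replace (2 * PI * IZR q) with (0 + 2 * IZR q * PI) by ring. now rewrite cos_perZ, cos_0. Qed.
Lemma sin_2q q : sin (2 * PI * IZR q) = 0.
Proof. replace (2 * PI * IZR q) with (0 + 2 * IZR q * PI) by ring. now rewrite sin_perZ, sin_0. Qed.
Lemma cos_2q_pi2 q : cos (2 * PI * IZR q + PI/2) = 0.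
Proof. replace (2 * PI * IZR q + PI/2) with (PI/2 + 2 * IZR q * PI) by ring. now rewrite cos_perZ, cos_PI2. Qed.
Lemma cos_2q_mpi2 q : cos (2 * PI * IZR q - PI/2) = 0.
Proof. replace (2 * PI * IZR q - PI/2) with (-(PI/2) + 2 * IZR q * PI) by ring. now rewrite cos_perZ, cos_neg, cos_PI2. Qed.

(* the half-angle reconstruction *)
Definition Hf (al x y : R) : R :=
  al + 2 * atan ((y * cos al - x * sin al) / (sqrt (x ^ 2 + y ^ 2) + x * cos al + y * sin al)).

Lemma Hf_polar al r t : 0 < r -> al - PI < t < al + PI -> Hf al (r * cos t) (r * sin t) = t.
Proof.
  intros hr ht. unfold Hf.
  assert (hs : sqrt ((r * cos t) ^ 2 + (r * sin t) ^ 2) = r).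
  { replace ((r * cos t) ^ 2 + (r * sin t) ^ 2) with (r ^ 2 * (sin t ^ 2 + cos t ^ 2)) by ring.
    rewrite <- !Rsqr_pow2, sin2_cos2, Rmult_1_r. rewrite Rsqr_pow2. apply sqrt_pow2; lra. }
  rewrite hs.
  set (u := t - al).
  assert (e1 : r * sin t * cos al - r * cos t * sin al = r * sin u).
  { unfold u; rewrite sin_minus; ring. }
  assert (e2 : r + r * cos t * cos al + r * sin t * sin al = r * (1 + cos u)).
  { unfold u; rewrite cos_minus; ring. }
  rewrite e1, e2.
  assert (hu : - (PI/2) < u/2 < PI/2) by (unfold u; lra).
  assert (hc : 0 < cos (u/2)) by (apply cos_gt_0; lra).
  replace u with (2 * (u/2)) by field. rewrite sin_2a, cos_2a_cos.
  replace (r * (2 * sin (u / 2) * cos (u / 2)) / (r * (1 + (2 * cos (u / 2) * cos (u / 2) - 1))))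
    with (tan (u/2)) by (unfold tan; field; repeat split; nra).
  rewrite atan_tan by lra. unfold u; field.
Qed.

Lemma cont_Hf (gx gy : R -> R) al x0 :
  continuity_pt gx x0 -> continuity_pt gy x0 ->
  0 < sqrt (gx x0 ^ 2 + gy x0 ^ 2) + gx x0 * cos al + gy x0 * sin al ->
  continuity_pt (fun k => Hf al (gx k) (gy k)) x0.
Proof.
  intros hx hy hd. unfold Hf.
  apply continuity_pt_plus. apply continuity_pt_const; intros ? ?; auto.
  apply continuity_pt_mult. apply continuity_pt_const; intros ? ?; auto.
  apply (continuity_pt_comp (fun k => (gy k * cos al - gx k * sin al) /
        (sqrt (gx k ^ 2 + gy k ^ 2) + gx k * cos al + gy k * sin al)) atan).
  2: { apply derivable_continuous_pt, derivable_pt_atan. }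
  assert (hsq : continuity_pt (fun k => sqrt (gx k ^ 2 + gy k ^ 2)) x0).
  { apply (continuity_pt_comp (fun k => gx k ^ 2 + gy k ^ 2) sqrt).
    - apply continuity_pt_plus; apply continuity_pt_mult; auto;
      apply continuity_pt_mult; auto; apply continuity_pt_const; intros ? ?; auto.
    - apply continuity_pt_sqrt. nra. }
  apply (continuity_pt_div (fun k => gy k * cos al - gx k * sin al)
                           (fun k => sqrt (gx k ^ 2 + gy k ^ 2) + gx k * cos al + gy k * sin al)).
  - apply continuity_pt_minus; apply continuity_pt_mult; auto; apply continuity_pt_const; intros ? ?; auto.
  - apply continuity_pt_plus; [apply continuity_pt_plus|]; auto;
    apply continuity_pt_mult; auto; apply continuity_pt_const; intros ? ?; auto.
  - lra.
Qed.


Lemma a1_complex A B RR x y :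
  let u := x ^ 2 - y ^ 2 - B ^ 2 in let v := 2 * x * y in
  let E := exp (- 4 * RR * y) in let ph := 4 * RR * x in
  u ^ 2 + v ^ 2 <> 0 ->
  a1 A B RR (x, y) =
  (1 + A ^ 2 * E * (u * cos ph + v * sin ph) / (4 * (u ^ 2 + v ^ 2)),
   A ^ 2 * E * (u * sin ph - v * cos ph) / (4 * (u ^ 2 + v ^ 2))).
Proof.
  intros u v E ph hN.
  unfold a1, cexp, Cdiv, Cplus, Cmult, Cinv, Cminus, Copp, RtoC, Re, Im, Ci; simpl.
  unfold E, ph, u, v in *.
  replace (4 * 0 - 0 * 1) with 0 by ring.
  replace ((0 * (x * RR - y * 0) - (4 * 1 + 0 * 0) * (x * 0 + y * RR))) with (- 4 * RR * y) by ring.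
  replace ((0 * (x * 0 + y * RR) + (4 * 1 + 0 * 0) * (x * RR - y * 0))) with (4 * RR * x) by ring.
  f_equal; field; (split; [lra|]); intro h; apply hN; nra.
Qed.

Lemma a1_real A B RR k : k ^ 2 <> B ^ 2 ->
  a1 A B RR (RtoC k) = (1 + A ^ 2 / (4 * (k ^ 2 - B ^ 2)) * cos (4 * k * RR),
                        A ^ 2 / (4 * (k ^ 2 - B ^ 2)) * sin (4 * k * RR)).
Proof.
  intro h. unfold RtoC. rewrite a1_complex.
  2: { intro e. apply h. nra. }
  replace (- 4 * RR * 0) with 0 by ring. rewrite exp_0.
  assert (k ^ 2 - B ^ 2 <> 0) by (intro; apply h; lra).
  assert ((k ^ 2 - 0 ^ 2 - B ^ 2) ^ 2 + (2 * k * 0) ^ 2 = (k^2 - B^2)^2) by ring.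
  rewrite H0. replace (k ^ 2 - 0 ^ 2 - B ^ 2) with (k^2 - B^2) by ring.
  replace (2 * k * 0) with 0 by ring.
  replace (4 * RR * k) with (4 * k * RR) by ring.
  f_equal; [f_equal|]; field; auto.
Qed.


Definition W (B RR : R) (m : nat) : R :=
  match m with O => - Rabs B | _ => - (2 * INR m - 1) * PI / (4 * RR) end.

Definition cc A B k := A ^ 2 / (4 * (k ^ 2 - B ^ 2)).

Lemma arg_real A B RR k t : k ^ 2 <> B ^ 2 -> is_arg (a1 A B RR (RtoC k)) t ->
  exists r, 0 < r /\ 1 + cc A B k * cos (4 * k * RR) = r * cos t /\
            cc A B k * sin (4 * k * RR) = r * sin t.
Proof.
  intros hk [hz [h1 h2]]. exists (Cmod (a1 A B RR (RtoC k))).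
  split. apply Cmod_gt_0; auto.
  set (r := Cmod (a1 A B RR (RtoC k))) in *.
  rewrite a1_real in h1, h2 by auto. unfold cc. unfold Re, Im in h1, h2. simpl fst in h1. simpl snd in h2.
  split; [rewrite <- h1|rewrite <- h2]; reflexivity.
Qed.

Lemma piZ_lt a b : PI * a < PI * b -> a < b.
Proof. intro h. apply Rmult_lt_reg_l with PI. apply PI_RGT_0. auto. Qed.

Lemma Bsq B : B ^ 2 = Rabs B ^ 2.
Proof. rewrite <- Rsqr_pow2, Rsqr_abs, Rsqr_pow2; auto. Qed.

Lemma S_sq A B : sqrt (4 * B ^ 2 + A ^ 2) ^ 2 = 4 * B ^ 2 + A ^ 2.
Proof. rewrite <- Rsqr_pow2, Rsqr_sqrt; auto. nra. Qed.

Lemma avoid_L A B RR n k :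
  0 < A -> 0 < RR -> 0 < 4 * Rabs B * RR < PI ->
  RR < (2 * INR n + 1) * PI / Rcrit A B ->
  k < - Rabs B ->
  (forall m, (1 <= m <= n)%nat -> k <> W B RR m) ->
  cc A B k * sin (4 * k * RR) = 0 -> 1 + cc A B k * cos (4 * k * RR) < 0 -> False.
Proof.
  intros hA hR hB hn hk hW hs hc.
  assert (hp := PI_RGT_0).
  assert (hb : 0 < Rabs B) by (destruct (Rle_lt_dec (Rabs B) 0); nra).
  assert (hk2 : k ^ 2 - B ^ 2 > 0).
  { rewrite (Bsq B). assert (0 < (-k - Rabs B) * (-k + Rabs B)) by (apply Rmult_lt_0_compat; lra). replace (k ^ 2 - Rabs B ^ 2) with ((-k - Rabs B) * (-k + Rabs B)) by ring; lra. }
  assert (hcp : cc A B k > 0) by (unfold cc; apply Rdiv_lt_0_compat; [apply pow_lt; lra | lra]).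
  assert (hs0 : sin (4 * k * RR) = 0) by (apply Rmult_integral in hs; destruct hs; lra).
  assert (hsc := sin2_cos2 (4 * k * RR)). rewrite hs0 in hsc. unfold Rsqr in hsc.
  assert (hcn : cos (4 * k * RR) < 0).
  { destruct (Rlt_le_dec (cos (4 * k * RR)) 0); auto. assert (0 <= cc A B k * cos (4 * k * RR)) by (apply Rmult_le_pos; lra). lra. }
  assert (hcm : cos (4 * k * RR) = -1).
  { assert ((cos (4 * k * RR) + 1) * (cos (4 * k * RR) - 1) = 0) by nra.
    apply Rmult_integral in H. destruct H; lra. }
  destruct (cos_m1 _ hcm) as [q hq].
  assert (hc1 : cc A B k > 1) by (rewrite hcm in hc; lra).
  assert (hA2 : A ^ 2 > 4 * (k ^ 2 - B ^ 2)).
  { unfold cc in hc1. apply Rmult_gt_compat_r with (r := 4 * (k ^ 2 - B ^ 2)) in hc1; [|lra].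
    unfold Rdiv in hc1. rewrite Rmult_assoc, Rinv_l in hc1; lra. }
  assert (hq1 : (q <= -1)%Z).
  { assert (PI * (1 + 2 * IZR q) < PI * 0) by nra.
    apply piZ_lt in H. assert (IZR q < IZR 0) by (simpl; lra). apply lt_IZR in H0. lia. }
  set (m := Z.to_nat (- q)).
  assert (hm : INR m = - IZR q) by (unfold m; rewrite INR_IZR_INZ, Z2Nat.id by lia; apply opp_IZR).
  assert (hkm : k = - (2 * INR m - 1) * PI / (4 * RR)) by (rewrite hm; field_simplify_eq; lra).
  destruct (le_lt_dec m n) as [hmn|hmn].
  - apply (hW m). unfold m; lia. rewrite hkm. unfold W. destruct m eqn:E. unfold m in E; lia. reflexivity.
  - apply le_INR in hmn. rewrite S_INR in hmn.
    set (S := sqrt (4 * B ^ 2 + A ^ 2)) in *.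
    assert (hS2 : S ^ 2 = 4 * B ^ 2 + A ^ 2) by apply S_sq.
    assert (hS : 0 < S) by (apply sqrt_lt_R0; nra).
    unfold Rcrit in hn. fold S in hn.
    assert (h1 : 2 * S * RR < (2 * INR n + 1) * PI).
    { apply Rmult_lt_compat_r with (r := 2 * S) in hn; [|lra].
      unfold Rdiv in hn. rewrite Rmult_assoc, Rinv_l in hn; lra. }
    assert (h2 : - k * (4 * RR) = (2 * INR m - 1) * PI) by (rewrite hkm; field; lra).
    assert (h3 : - k * 4 * RR > 2 * S * RR) by nra.
    assert (h4 : - k * 2 > S) by (apply Rmult_gt_reg_r with (2 * RR); nra).
    nra.
Qed.


Lemma strip_transfer (f : R -> R) (P : R -> Prop) lo hi k1 k2 :
  (forall k, Rmin k1 k2 <= k <= Rmax k1 k2 -> P k) ->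
  (forall k, P k -> continuous f k) ->
  (forall k, P k -> f k <> lo) -> (forall k, P k -> f k <> hi) ->
  lo < f k1 < hi -> lo < f k2 < hi.
Proof.
  intros hP hc hlo hhi [h1 h2].
  assert (e1 := same_side f P hi k1 k2 hP hc hhi).
  assert (e2 := same_side f P lo k1 k2 hP hc hlo).
  split; [|tauto].
  destruct (Rlt_le_dec lo (f k2)) as [h|h]; auto.
  destruct (Rle_lt_or_eq_dec _ _ h) as [h'|h'].
  - apply e2 in h'. lra.
  - exfalso. apply (hlo k2); auto. apply hP. unfold Rmin, Rmax; destruct Rle_dec; lra.
Qed.

Lemma cont_delta (f : R -> R) x e : continuous f x -> 0 < e ->
  exists d, 0 < d /\ forall y, Rabs (y - x) < d -> Rabs (f y - f x) < e.
Proof.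
  intros hc he.
  assert (H : locally (f x) (fun v => Rabs (v - f x) < e)).
  { exists (mkposreal e he). intros v hv. apply hv. }
  destruct (hc _ H) as [d hd]. exists d. split. apply cond_pos. intros y hy. apply hd. apply hy.
Qed.

Definition Hyps A B RR (phi : R -> R) :=
  0 < A /\ 0 < RR /\ 0 < 4 * Rabs B * RR < PI /\ is_phi A B RR phi.

Lemma W_lt_b B RR m : 0 < RR -> 4 * Rabs B * RR < PI -> (1 <= m)%nat -> W B RR m < - Rabs B.
Proof.
  intros hR hB hm. destruct m. lia. unfold W.
  assert (hp := PI_RGT_0). assert (1 <= INR (S m)) by (apply (le_INR 1); lia).
  apply Rmult_lt_reg_r with (4 * RR). lra.
  unfold Rdiv. rewrite Rmult_assoc, Rinv_l by lra. nra.
Qed.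

Lemma W_le B RR m m' : 0 < RR -> 4 * Rabs B * RR < PI -> (m <= m')%nat -> W B RR m' <= W B RR m.
Proof.
  intros hR hB hm. destruct m' as [|m'].
  - assert (m = 0)%nat by lia. subst. lra.
  - destruct m as [|m].
    + left. apply W_lt_b; auto; lia.
    + unfold W. apply le_INR in hm. assert (hp := PI_RGT_0).
      apply Rmult_le_reg_r with (4 * RR). lra.
      unfold Rdiv. rewrite !Rmult_assoc, !Rinv_l by lra. nra.
Qed.

Lemma W_lt B RR m m' : 0 < RR -> 4 * Rabs B * RR < PI -> (m < m')%nat -> W B RR m' < W B RR m.
Proof.
  intros hR hB hm. destruct m' as [|m']. lia.
  destruct m as [|m].
  + apply W_lt_b; auto; lia.
  + unfold W. apply lt_INR in hm. assert (hp := PI_RGT_0).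
    apply Rmult_lt_reg_r with (4 * RR). lra.
    unfold Rdiv. rewrite !Rmult_assoc, !Rinv_l by lra. nra.
Qed.

Lemma WS B RR m : 0 < RR -> (1 <= m)%nat -> W B RR (S m) = W B RR m - PI / (2 * RR).
Proof.
  intros hR hm. destruct m. lia. unfold W. rewrite !S_INR. field. lra.
Qed.

Definition In_ B RR (n j : nat) k :=
  ((j = 0)%nat \/ W B RR (n - j + 1) < k) /\ k < W B RR (n - j).

Lemma In_not_W B RR n j k : 0 < RR -> 4 * Rabs B * RR < PI -> (j <= n)%nat ->
  In_ B RR n j k -> (forall m, (1 <= m <= n)%nat -> k <> W B RR m) /\ k < - Rabs B.
Proof.
  intros hR hB hj [h1 h2]. split.
  - intros m hm e. subst k. destruct (le_lt_dec m (n - j)) as [h|h].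
    + assert (W B RR (n - j) <= W B RR m) by (apply W_le; auto). lra.
    + destruct h1 as [h1|h1].
      * subst j. replace (n - 0)%nat with n in h by lia. lia.
      * assert (W B RR m <= W B RR (n - j + 1)) by (apply W_le; auto; lia). lra.
  - assert (W B RR (n - j) <= W B RR 0) by (apply W_le; auto; lia). simpl in H. lra.
Qed.

Lemma avoid_phi_L A B RR phi n k : Hyps A B RR phi ->
  RR < (2 * INR n + 1) * PI / Rcrit A B ->
  k < - Rabs B -> (forall m, (1 <= m <= n)%nat -> k <> W B RR m) ->
  forall q : Z, phi k <> PI + 2 * PI * IZR q.
Proof.
  intros [hA [hR [hB hphi]]] hn hk hW q e.
  destruct hphi as [hL _].
  destruct (hL k hk) as [harg _].
  assert (hb : 0 < Rabs B) by (destruct (Rle_lt_dec (Rabs B) 0); nra).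
  assert (hk2 : k ^ 2 <> B ^ 2).
  { rewrite (Bsq B). intro h. assert ((-k - Rabs B) * (-k + Rabs B) = 0) by (ring_simplify; lra).
    apply Rmult_integral in H. lra. }
  destruct (arg_real A B RR k _ hk2 harg) as [r [hr [h1 h2]]].
  rewrite e, cos_pi_2q in h1. rewrite e, sin_pi_2q in h2.
  apply (avoid_L A B RR n k hA hR hB hn hk hW); lra.
Qed.


Definition Strip B RR (phi : R -> R) n j :=
  forall k, In_ B RR n j k -> 2 * PI * INR j - PI < phi k < 2 * PI * INR j + PI.

Lemma INR_Z j : INR j = IZR (Z.of_nat j).
Proof. apply INR_IZR_INZ. Qed.

Lemma In_interval B RR n j k1 k2 : In_ B RR n j k1 -> In_ B RR n j k2 ->
  forall k, Rmin k1 k2 <= k <= Rmax k1 k2 -> In_ B RR n j k.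
Proof.
  unfold In_, Rmin, Rmax. intros [a1 b1] [a2 b2] k hk.
  destruct a1 as [a1|a1]; [destruct Rle_dec; split; [left; auto|lra|left;auto|lra]|].
  destruct a2 as [a2|a2]; [destruct Rle_dec; split; [left; auto|lra|left;auto|lra]|].
  destruct Rle_dec; split; try right; lra.
Qed.

Lemma strip_fill A B RR phi n j k0 : Hyps A B RR phi ->
  RR < (2 * INR n + 1) * PI / Rcrit A B -> (j <= n)%nat ->
  In_ B RR n j k0 -> 2 * PI * INR j - PI < phi k0 < 2 * PI * INR j + PI ->
  Strip B RR phi n j.
Proof.
  intros H hn hj hk0 hs k hk.
  assert (H' := H). destruct H' as [hA [hR [hB hphi]]].
  apply (strip_transfer phi (In_ B RR n j) _ _ k0 k).
  - apply In_interval; auto.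
  - intros x hx. destruct (In_not_W B RR n j x hR (proj2 hB) hj hx) as [_ hx'].
    apply (proj1 hphi x hx').
  - intros x hx. destruct (In_not_W B RR n j x hR (proj2 hB) hj hx) as [hW hx'].
    replace (2 * PI * INR j - PI) with (PI + 2 * PI * IZR (Z.of_nat j - 1)).
    apply (avoid_phi_L A B RR phi n x H hn hx' hW).
    rewrite minus_IZR, <- INR_Z. simpl. ring.
  - intros x hx. destruct (In_not_W B RR n j x hR (proj2 hB) hj hx) as [hW hx'].
    replace (2 * PI * INR j + PI) with (PI + 2 * PI * IZR (Z.of_nat j)).
    apply (avoid_phi_L A B RR phi n x H hn hx' hW).
    rewrite <- INR_Z. ring.
  - auto.
Qed.

Lemma strip0 A B RR phi n : Hyps A B RR phi ->
  RR < (2 * INR n + 1) * PI / Rcrit A B -> Strip B RR phi n 0.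
Proof.
  intros H hn. assert (H' := H). destruct H' as [hA [hR [hB [_ [_ [hlim _]]]]]].
  assert (hP : locally 0 (fun v => Rabs (v - 0) < PI)).
  { exists (mkposreal PI PI_RGT_0). intros v hv. apply hv. }
  destruct (hlim _ hP) as [M hM].
  set (k0 := Rmin M (W B RR n) - 1).
  assert (h0 : Rabs (phi k0 - 0) < PI).
  { apply hM. unfold k0. assert (Rmin M (W B RR n) <= M) by apply Rmin_l. lra. }
  apply (strip_fill A B RR phi n 0 k0 H hn). lia.
  - split. left; auto. replace (n - 0)%nat with n by lia. unfold k0.
    assert (Rmin M (W B RR n) <= W B RR n) by apply Rmin_r. lra.
  - simpl. rewrite Rminus_0_r in h0. apply Rabs_def2 in h0. lra.
Qed.


Lemma k2_ne (A : R) B k : k < - Rabs B -> k ^ 2 <> B ^ 2 /\ k ^ 2 - B ^ 2 > 0.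
Proof.
  intro hk. assert (0 <= Rabs B) by apply Rabs_pos.
  assert (0 < (-k - Rabs B) * (-k + Rabs B)) by (apply Rmult_lt_0_compat; lra).
  rewrite (Bsq B). split; [intro h|]; nra.
Qed.

Lemma c_gt_1 A B RR n m : 0 < A -> 0 < RR -> 4 * Rabs B * RR < PI -> (1 <= m <= n)%nat ->
  (2 * INR n - 1) * PI / Rcrit A B < RR -> cc A B (W B RR m) > 1.
Proof.
  intros hA hR hB hm hn.
  assert (hp := PI_RGT_0).
  assert (hw := W_lt_b B RR m hR hB (proj1 hm)).
  destruct (k2_ne A B _ hw) as [_ hpos].
  set (w := W B RR m) in *.
  set (S := sqrt (4 * B ^ 2 + A ^ 2)) in *.
  assert (hS2 : S ^ 2 = 4 * B ^ 2 + A ^ 2) by apply S_sq.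
  assert (hS : 0 < S) by (apply sqrt_lt_R0; nra).
  unfold Rcrit in hn. fold S in hn.
  assert (h1 : (2 * INR n - 1) * PI < 2 * S * RR).
  { apply Rmult_lt_compat_r with (r := 2 * S) in hn; [|lra].
    unfold Rdiv in hn. rewrite Rmult_assoc, Rinv_l in hn; lra. }
  assert (hmn : INR m <= INR n) by (apply le_INR; lia).
  assert (hm1 : 1 <= INR m) by (apply (le_INR 1); lia).
  assert (h2 : - w * (4 * RR) = (2 * INR m - 1) * PI).
  { unfold w, W. destruct m. lia. field. lra. }
  assert (h3 : - w * 4 * RR < 2 * S * RR) by nra.
  assert (h4 : - w * 2 < S) by (apply Rmult_lt_reg_r with (2 * RR); nra).
  assert (h5 : 0 < -w) by nra.
  assert (h6 : 4 * (w ^ 2 - B ^ 2) < A ^ 2) by nra.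
  unfold cc. apply Rmult_gt_reg_r with (4 * (w ^ 2 - B ^ 2)). lra.
  unfold Rdiv. rewrite Rmult_assoc, Rinv_l; lra.
Qed.

Lemma W_trig B RR m x : 0 < RR -> (1 <= m)%nat ->
  sin (4 * (W B RR m + x) * RR) = - sin (4 * x * RR) /\
  cos (4 * (W B RR m + x) * RR) = - cos (4 * x * RR).
Proof.
  intros hR hm. destruct m. lia.
  assert (e : 4 * (W B RR (S m) + x) * RR + 2 * INR (S m) * PI = 4 * x * RR + PI).
  { unfold W. field. lra. }
  split.
  - rewrite <- (sin_period _ (S m)), e, neg_sin. auto.
  - rewrite <- (cos_period _ (S m)), e, neg_cos. auto.
Qed.

Lemma cross A B RR phi n j : Hyps A B RR phi ->
  (2 * INR n - 1) * PI / Rcrit A B < RR ->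
  RR < (2 * INR n + 1) * PI / Rcrit A B -> (j < n)%nat ->
  Strip B RR phi n j ->
  phi (W B RR (n - j)) = (2 * INR j + 1) * PI /\ Strip B RR phi n (S j).
Proof.
  intros H hn1 hn2 hj hS.
  assert (H' := H). destruct H' as [hA [hR [hB hphi]]].
  assert (hp := PI_RGT_0).
  assert (hb : 0 < Rabs B) by (destruct (Rle_lt_dec (Rabs B) 0); nra).
  set (m := (n - j)%nat).
  assert (hm : (1 <= m <= n)%nat) by (unfold m; lia).
  set (w := W B RR m).
  assert (hw : w < - Rabs B) by (apply W_lt_b; auto; lra || lia).
  assert (hwc : continuous phi w) by (apply (proj1 hphi w hw)).
  destruct (cont_delta phi w (PI/2) hwc) as [dl [hdl hd]]. lra.
  set (D := (PI - 4 * Rabs B * RR) / (4 * RR)).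
  assert (hD : 0 < D) by (unfold D; apply Rdiv_lt_0_compat; lra).
  assert (hD2 : D < PI / (4 * RR)).
  { unfold D. unfold Rdiv. apply Rmult_lt_compat_r. apply Rinv_0_lt_compat; lra. lra. }
  set (d := Rmin dl D / 2).
  assert (hd0 : 0 < d) by (unfold d; assert (0 < Rmin dl D) by (apply Rmin_glb_lt; lra); lra).
  assert (hd1 : d < dl) by (unfold d; assert (Rmin dl D <= dl) by apply Rmin_l; lra).
  assert (hd2 : d < D) by (unfold d; assert (Rmin dl D <= D) by apply Rmin_r; lra).
  assert (h4d : 0 < 4 * d * RR < PI).
  { split. nra. assert (4 * D * RR < PI) by (unfold D; field_simplify; lra). nra. }
  assert (hsd : 0 < sin (4 * d * RR)) by (apply sin_gt_0; lra).
  set (kL := w + - d). set (kR := w + d).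
  assert (hkL : In_ B RR n j kL).
  { split.
    - destruct j as [|j']. left; auto. right.
      replace (n - S j' + 1)%nat with (S m) by (unfold m; lia).
      rewrite WS by (auto; lia). fold w. unfold kL.
      assert (PI / (4 * RR) < PI / (2 * RR)).
      { unfold Rdiv. apply Rmult_lt_compat_l. lra. apply Rinv_lt_contravar; nra. }
      lra.
    - fold m w. unfold kL. lra. }
  assert (hkR : In_ B RR n (S j) kR).
  { split.
    - right. replace (n - S j + 1)%nat with m by (unfold m; lia). fold w. unfold kR. lra.
    - unfold kR. destruct (Nat.eq_dec m 1) as [e|e].
      + replace (n - S j)%nat with 0%nat by (unfold m in e; lia). simpl.
        assert (w = - PI / (4 * RR)) by (unfold w; rewrite e; unfold W; simpl; field; lra).
        assert (D = - Rabs B + PI / (4 * RR)) by (unfold D; field; lra). lra.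
      + assert (ew : w = W B RR (S (n - S j))) by (unfold w; f_equal; unfold m; lia).
        assert (w = W B RR (n - S j) - PI / (2 * RR)).
        { rewrite ew. apply WS; auto. unfold m in e; lia. }
        assert (PI / (4 * RR) < PI / (2 * RR)).
        { unfold Rdiv. apply Rmult_lt_compat_l. lra. apply Rinv_lt_contravar; nra. }
        lra. }
  destruct (k2_ne A B _ hw) as [hw2 hw2'].
  destruct (arg_real A B RR w _ hw2 (proj1 (proj1 hphi w hw))) as [r [hr [e1 e2]]].
  assert (hc1 := c_gt_1 A B RR n m hA hR (proj2 hB) hm hn1). fold w in hc1.
  destruct (W_trig B RR m 0 hR (proj1 hm)) as [t1 t2]. rewrite Rplus_0_r in t1, t2.
  rewrite Rmult_0_r, Rmult_0_l, sin_0 in t1. rewrite Rmult_0_r, Rmult_0_l, cos_0 in t2. fold w in t1, t2.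
  rewrite t1 in e2. rewrite t2 in e1.
  assert (hsw : sin (phi w) = 0) by nra.
  assert (hcw : cos (phi w) < 0) by nra.
  assert (hcw' : cos (phi w) = -1).
  { assert (hh := sin2_cos2 (phi w)). rewrite hsw in hh. unfold Rsqr in hh.
    assert ((cos (phi w) + 1) * (cos (phi w) - 1) = 0) by nra.
    apply Rmult_integral in H0. destruct H0; lra. }
  destruct (cos_m1 _ hcw') as [q hq].
  destruct (In_not_W B RR n j kL hR (proj2 hB) (Nat.lt_le_incl _ _ hj) hkL) as [_ hkLb].
  destruct (k2_ne A B _ hkLb) as [hL2 hL2'].
  destruct (arg_real A B RR kL _ hL2 (proj1 (proj1 hphi kL hkLb))) as [rL [hrL [_ eL]]].
  assert (hcL : cc A B kL > 0) by (unfold cc; apply Rdiv_lt_0_compat; [apply pow_lt; lra|lra]).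
  destruct (W_trig B RR m (-d) hR (proj1 hm)) as [tL _]. fold w kL in tL.
  replace (4 * - d * RR) with (- (4 * d * RR)) in tL by ring. rewrite sin_neg in tL.
  rewrite tL in eL.
  assert (hsL : sin (phi kL) > 0) by nra.
  assert (hpL := hS kL hkL).
  rewrite INR_Z in hpL.
  destruct (sin_pos_strip (phi kL) (Z.of_nat j)) as [hpL1 hpL2]. lra. lra.
  assert (hdL : Rabs (phi kL - phi w) < PI / 2).
  { apply hd. unfold kL. replace (w + - d - w) with (- d) by ring. rewrite Rabs_Ropp, Rabs_pos_eq; lra. }
  apply Rabs_def2 in hdL.
  assert (hqj : q = Z.of_nat j).
  { rewrite hq in hdL.
    assert (a1' : PI * (2 * IZR q + 1) < PI * (2 * IZR (Z.of_nat j) + 3/2)) by lra.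
    assert (a2' : PI * (2 * IZR (Z.of_nat j) - 1/2) < PI * (2 * IZR q + 1)) by lra.
    apply piZ_lt in a1'. apply piZ_lt in a2'.
    assert (IZR q < IZR (Z.of_nat j + 1)) by (rewrite plus_IZR; simpl; lra).
    assert (IZR (Z.of_nat j - 1) < IZR q) by (rewrite minus_IZR; simpl; lra).
    apply lt_IZR in H0. apply lt_IZR in H1. lia. }
  subst q.
  assert (hval : phi w = (2 * INR j + 1) * PI) by (rewrite hq, INR_Z; ring).
  split. exact hval.
  destruct (In_not_W B RR n (S j) kR hR (proj2 hB) hj hkR) as [_ hkRb].
  destruct (k2_ne A B _ hkRb) as [hR2 hR2'].
  destruct (arg_real A B RR kR _ hR2 (proj1 (proj1 hphi kR hkRb))) as [rR [hrR [_ eR]]].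
  assert (hcR : cc A B kR > 0) by (unfold cc; apply Rdiv_lt_0_compat; [apply pow_lt; lra|lra]).
  destruct (W_trig B RR m d hR (proj1 hm)) as [tR _]. fold w kR in tR.
  rewrite tR in eR.
  assert (hsR : sin (phi kR) < 0) by nra.
  assert (hdR : Rabs (phi kR - phi w) < PI / 2).
  { apply hd. unfold kR. replace (w + d - w) with d by ring. rewrite Rabs_pos_eq; lra. }
  apply Rabs_def2 in hdR. rewrite hval in hdR. destruct hdR as [hdR1 hdR2].
  assert (hgt : phi kR > 2 * PI * INR j + PI).
  { destruct (Rlt_le_dec (2 * PI * INR j + PI) (phi kR)) as [hh|hh]; auto.
    destruct (sin_neg_strip (phi kR) (Z.of_nat j)) as [hpR1 hpR2].
    { rewrite <- INR_Z. lra. } lra. rewrite <- INR_Z in hpR2. lra. }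
  apply (strip_fill A B RR phi n (S j) kR H hn2). lia. auto. rewrite S_INR. lra.
Qed.


Lemma cos_lb x : Rabs x <= 1/2 -> 7/8 <= cos x.
Proof.
  intro h. assert (hp := PI2_1). assert (h' : -(1/2) <= x <= 1/2) by (unfold Rabs in h; destruct Rcase_abs in h; lra). clear h. rename h' into h.
  destruct (cos_bound x 0) as [h1 _]. lra. lra.
  unfold cos_approx, cos_term in h1. simpl in h1. nra.
Qed.

Lemma semi_T A B RR eps t :
  0 < A -> 0 < RR -> 0 < Rabs B -> 0 < eps -> eps <= Rabs B / 2 -> 4 * RR * eps <= 1/2 ->
  40 * Rabs B * eps < A ^ 2 ->
  let z := a1 A B RR (semicircle B eps t) in
  0 < Re z * cos (t - 4 * Rabs B * RR) + Im z * sin (t - 4 * Rabs B * RR).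
Proof.
  intros hA hR hb he he1 he2 he3 z.
  set (b := Rabs B) in *.
  set (ct := cos t). set (st := sin t).
  assert (hcs : ct ^ 2 + st ^ 2 = 1) by (unfold ct, st; rewrite <- !Rsqr_pow2, Rplus_comm; apply sin2_cos2).
  assert (hsemi : semicircle B eps t = (- b - eps * ct, eps * st)).
  { unfold semicircle. fold b. rewrite cos_minus, sin_minus, cos_PI, sin_PI. unfold ct, st. f_equal; ring. }
  set (x := - b - eps * ct) in *. set (y := eps * st) in *.
  set (u := x ^ 2 - y ^ 2 - B ^ 2). set (v := 2 * x * y).
  set (M := (2 * b + eps * ct) ^ 2 + eps ^ 2 * st ^ 2).
  assert (hB2 : B ^ 2 = b ^ 2) by apply Bsq.
  assert (hN : u ^ 2 + v ^ 2 = eps ^ 2 * M).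
  { transitivity (eps ^ 2 * (ct ^ 2 + st ^ 2) * M).
    unfold u, v, M, x, y; rewrite hB2; ring. rewrite hcs; ring. }
  assert (hct := COS_bound t). assert (hst := SIN_bound t). fold ct st in hct, hst.
  assert (hMe : M = 4 * b ^ 2 + 4 * b * eps * ct + eps ^ 2).
  { transitivity (4 * b ^ 2 + 4 * b * eps * ct + eps ^ 2 * (ct ^ 2 + st ^ 2)). unfold M; ring. rewrite hcs; ring. }
  assert (hbe0 : 0 <= b * eps) by nra.
  assert (hM1 : (2 * b - eps) ^ 2 <= M).
  { rewrite hMe. assert (b * eps * ct >= - (b * eps)) by nra. nra. }
  assert (hM2 : M <= (2 * b + eps) ^ 2).
  { rewrite hMe. assert (b * eps * ct <= b * eps) by nra. nra. }
  assert (hMp : 0 < M) by nra.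
  assert (hNz : u ^ 2 + v ^ 2 <> 0) by (rewrite hN; apply Rgt_not_eq; apply Rmult_lt_0_compat; [apply pow_lt|]; lra).
  unfold z. rewrite hsemi. rewrite (a1_complex A B RR x y) by exact hNz.
  fold u v. unfold Re, Im; cbn [fst snd].
  set (E := exp (- 4 * RR * y)).
  set (ph := 4 * RR * x). set (ps := t - 4 * b * RR).
  set (be := 4 * RR * eps * ct).
  assert (hbr : (u * cos ph + v * sin ph) * cos ps + (u * sin ph - v * cos ph) * sin ps
                = eps * (2 * b * cos be + eps * (ct * cos be + st * sin be))).
  { transitivity (u * cos (ph - ps) + v * sin (ph - ps)).
    { rewrite cos_minus, sin_minus. ring. }
    replace (ph - ps) with (- (t + be)) by (unfold ph, ps, be, x; ring).
    rewrite cos_neg, sin_neg, cos_plus, sin_plus. fold ct st.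
    unfold u, v, x, y. rewrite hB2.
    transitivity (eps * (ct ^ 2 + st ^ 2) * (2 * b * cos be + eps * (ct * cos be + st * sin be))).
    ring. rewrite hcs. ring. }
  assert (hbe : 7/8 <= cos be).
  { apply cos_lb. unfold be. rewrite Rabs_mult. rewrite (Rabs_pos_eq (4 * RR * eps)) by nra.
    assert (Rabs ct <= 1) by (apply Rabs_le; lra). assert (0 <= Rabs ct) by apply Rabs_pos. assert (0 <= 4 * RR * eps) by nra. nra. }
  assert (hcm : -1 <= ct * cos be + st * sin be).
  { unfold ct, st. rewrite <- cos_minus. apply COS_bound. }
  assert (hE : 1/2 <= E).
  { unfold E. assert (h := exp_ineq1_le (- 4 * RR * y)). unfold y in *. assert (RR * eps * st <= RR * eps) by (assert (0 <= RR * eps) by nra; nra). unfold E, y in h. lra. }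
  assert (hX : 5 * b / 4 <= 2 * b * cos be + eps * (ct * cos be + st * sin be)) by nra.
  set (X := A ^ 2 * E * (2 * b * cos be + eps * (ct * cos be + st * sin be))).
  assert (hA2 : 0 < A ^ 2) by (apply pow_lt; lra).
  assert (hXl : A ^ 2 * (5 * b / 8) <= X).
  { assert (0 <= A ^ 2 * E) by nra.
    assert (A ^ 2 * E * (5 * b / 4) <= X) by (unfold X; apply Rmult_le_compat_l; lra). assert (0 <= A ^ 2 * (5 * b / 4)) by nra. assert (0 <= A ^ 2 * (5 * b / 4) * (E - 1/2)) by (apply Rmult_le_pos; lra). assert (A ^ 2 * E * (5 * b / 4) - A ^ 2 * (5 * b / 8) = A ^ 2 * (5 * b / 4) * (E - 1/2)). field. lra. }
  assert (hY : 4 * eps * M <= 25 * eps * b ^ 2) by nra.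
  assert (hXY : 4 * eps * M < X) by nra.
  assert (e : (1 + A ^ 2 * E * (u * cos ph + v * sin ph) / (4 * (u ^ 2 + v ^ 2))) * cos ps +
     A ^ 2 * E * (u * sin ph - v * cos ph) / (4 * (u ^ 2 + v ^ 2)) * sin ps
     = cos ps + X / (4 * eps * M)).
  { transitivity (cos ps + A ^ 2 * E * ((u * cos ph + v * sin ph) * cos ps + (u * sin ph - v * cos ph) * sin ps) / (4 * (u ^ 2 + v ^ 2))).
    field. auto. rewrite hbr, hN. unfold X. field. split; lra. }
  rewrite e.
  assert (1 < X / (4 * eps * M)).
  { apply Rmult_lt_reg_r with (4 * eps * M). nra. replace (X / (4 * eps * M) * (4 * eps * M)) with X by (field; split; lra). lra. }
  assert (hcp := COS_bound ps). lra.
Qed.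


Lemma within_shift (psi : R -> R) (D : R -> Prop) t c :
  filterlim psi (within D (locally t)) (locally (psi t)) ->
  filterlim (fun s => psi s - s + c) (within D (locally t)) (locally (psi t - t + c)).
Proof.
  intro H. apply filterlim_locally. intro eps.
  assert (he2 : 0 < eps / 2) by (destruct eps; simpl; lra).
  assert (h1 := proj1 (filterlim_locally _ _) H (mkposreal _ he2)).
  assert (h2 : within D (locally t) (fun s => ball t (mkposreal _ he2) s)).
  { exists (mkposreal _ he2). intros y hy _. exact hy. }
  generalize (filter_and _ _ h1 h2). apply filter_imp.
  intros s [a b]. change (Rabs (psi s - psi t) < eps / 2) in a. change (Rabs (s - t) < eps / 2) in b.
  change (Rabs (psi s - s + c - (psi t - t + c)) < eps).
  unfold Rabs in *. repeat destruct Rcase_abs; lra.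
Qed.

Lemma semi_arg A B RR eps (psi : R -> R) :
  0 < A -> 0 < RR -> 0 < Rabs B -> 0 < eps -> eps <= Rabs B / 2 -> 4 * RR * eps <= 1/2 ->
  40 * Rabs B * eps < A ^ 2 ->
  (forall t, 0 <= t <= PI ->
     is_arg (a1 A B RR (semicircle B eps t)) (psi t) /\
     filterlim psi (within (fun u => 0 <= u <= PI) (locally t)) (locally (psi t))) ->
  psi 0 < psi PI < psi 0 + 2 * PI.
Proof.
  intros hA hR hb he he1 he2 he3 hpsi.
  assert (hp := PI_RGT_0).
  set (th := 4 * Rabs B * RR).
  set (h := fun s => psi s - s + th).
  assert (hcos : forall t, 0 <= t <= PI -> 0 < cos (h t)).
  { intros t ht. destruct (hpsi t ht) as [[hz [e1 e2]] _].
    assert (hT := semi_T A B RR eps t hA hR hb he he1 he2 he3). cbv zeta in hT.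
    rewrite e1, e2 in hT.
    assert (hr : 0 < Cmod (a1 A B RR (semicircle B eps t))) by (apply Cmod_gt_0; auto).
    set (r := Cmod (a1 A B RR (semicircle B eps t))) in *.
    assert (e : cos (h t) = cos (psi t) * cos (t - th) + sin (psi t) * sin (t - th)).
    { rewrite <- cos_minus. unfold h. f_equal. ring. }
    rewrite e. fold th in hT.
    apply Rmult_lt_reg_l with r. auto. lra. }
  assert (hcont : forall t, 0 <= t <= PI ->
     filterlim h (within (fun u => 0 <= u <= PI) (locally t)) (locally (h t))).
  { intros t ht. apply within_shift. apply hpsi, ht. }
  destruct (cos_pos (h 0)) as [q [hq1 hq2]]. apply hcos; lra.
  assert (hup : h PI < 2 * PI * IZR q + PI / 2).
  { apply (no_cross h 0 PI); auto. lra.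
    intros t ht e. assert (hc := hcos t ht). rewrite e, cos_2q_pi2 in hc. lra. }
  assert (hlo : h PI > 2 * PI * IZR q - PI / 2).
  { apply (no_cross' h 0 PI); auto. lra.
    intros t ht e. assert (hc := hcos t ht). rewrite e, cos_2q_mpi2 in hc. lra. }
  unfold h in *. lra.
Qed.


Lemma cos_gt_m1 u : - PI < u < PI -> -1 < cos u.
Proof.
  intro h. replace u with (2 * (u/2)) by field. rewrite cos_2a_cos.
  assert (0 < cos (u/2)) by (apply cos_gt_0; lra). nra.
Qed.

Lemma lim_polar (phi gx gy : R -> R) al x0 (D : R -> Prop) L e :
  continuity_pt gx x0 -> continuity_pt gy x0 ->
  (exists rho, 0 < rho /\ gx x0 = rho * cos L /\ gy x0 = rho * sin L) ->
  al - PI < L < al + PI -> 0 < e ->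
  (forall k, Rabs (k - x0) < e -> D k -> exists r, 0 < r /\ gx k = r * cos (phi k) /\
       gy k = r * sin (phi k) /\ al - PI < phi k < al + PI) ->
  filterlim phi (within D (locally x0)) (locally L).
Proof.
  intros hx hy [rho [hrho [ex ey]]] hL he hk.
  assert (HL : Hf al (gx x0) (gy x0) = L) by (rewrite ex, ey; apply Hf_polar; auto).
  rewrite <- HL.
  apply (filterlim_ext_loc (fun k => Hf al (gx k) (gy k))).
  - exists (mkposreal e he). intros y hyy hD. destruct (hk y hyy hD) as [r [hr [e1 [e2 e3]]]].
    rewrite e1, e2. apply Hf_polar; auto.
  - eapply filterlim_filter_le_1. apply filter_le_within.
    apply (proj1 (continuity_pt_filterlim (fun k => Hf al (gx k) (gy k)) x0)). apply cont_Hf; auto.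
    rewrite ex, ey.
    assert (hs : sqrt ((rho * cos L) ^ 2 + (rho * sin L) ^ 2) = rho).
    { replace ((rho * cos L) ^ 2 + (rho * sin L) ^ 2) with (rho ^ 2 * (sin L ^ 2 + cos L ^ 2)) by ring.
      rewrite <- !Rsqr_pow2, sin2_cos2, Rmult_1_r. rewrite Rsqr_pow2. apply sqrt_pow2; lra. }
    rewrite hs.
    assert (hc := cos_gt_m1 (L - al) ltac:(lra)). rewrite cos_minus in hc. nra.
Qed.

Lemma strips_all A B RR phi n : Hyps A B RR phi ->
  (2 * INR n - 1) * PI / Rcrit A B < RR ->
  RR < (2 * INR n + 1) * PI / Rcrit A B ->
  forall j, (j <= n)%nat -> Strip B RR phi n j /\
     (forall i, (i < j)%nat -> phi (W B RR (n - i)) = (2 * INR i + 1) * PI).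
Proof.
  intros H hn1 hn2 j. induction j as [|j IH]; intro hj.
  - split. apply (strip0 A B RR phi n); auto. intros; lia.
  - destruct IH as [hs hv]. lia.
    destruct (cross A B RR phi n j H hn1 hn2 ltac:(lia) hs) as [h1 h2].
    split; auto. intros i hi. destruct (Nat.eq_dec i j). subst; auto. apply hv; lia.
Qed.


Lemma b_pos B RR : 0 < 4 * Rabs B * RR -> 0 < RR -> 0 < Rabs B.
Proof. intros. destruct (Rle_lt_dec (Rabs B) 0); auto. nra. Qed.

Lemma left_lim A B RR phi n : Hyps A B RR phi ->
  (2 * INR n - 1) * PI / Rcrit A B < RR ->
  RR < (2 * INR n + 1) * PI / Rcrit A B ->
  filterlim phi (at_left (- Rabs B)) (locally (2 * PI * INR n - 4 * Rabs B * RR)).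
Proof.
  intros H hn1 hn2.
  assert (H' := H). destruct H' as [hA [hR [hB hphi]]].
  assert (hp := PI_RGT_0). assert (hb := b_pos B RR (proj1 hB) hR).
  destruct (strips_all A B RR phi n H hn1 hn2 n (le_n n)) as [hs _].
  assert (hW1 : W B RR 1 < - Rabs B) by (apply W_lt_b; lra || lia).
  apply (lim_polar phi (fun k => 4 * (k ^ 2 - B ^ 2) / A ^ 2 + cos (4 * k * RR))
            (fun k => sin (4 * k * RR)) (2 * PI * INR n) (- Rabs B) _ _ (- Rabs B - W B RR 1)).
  - reg.
  - reg.
  - exists 1. split. lra. rewrite (Bsq B).
    replace (4 * ((- Rabs B) ^ 2 - Rabs B ^ 2) / A ^ 2) with 0 by (field; lra).
    replace (2 * PI * INR n - 4 * Rabs B * RR) with (4 * (- Rabs B) * RR + 2 * INR n * PI) by ring.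
    rewrite cos_period, sin_period. split; ring.
  - lra.
  - lra.
  - intros k hk hD.
    assert (hIn : In_ B RR n n k).
    { split. right. replace (n - n + 1)%nat with 1%nat by lia.
      apply Rabs_def2 in hk. lra. replace (n - n)%nat with 0%nat by lia. simpl. exact hD. }
    assert (hsk := hs k hIn).
    destruct (k2_ne A B k hD) as [hk1 hk2].
    destruct (arg_real A B RR k _ hk1 (proj1 (proj1 hphi k hD))) as [r [hr [e1 e2]]].
    exists (4 * (k ^ 2 - B ^ 2) / A ^ 2 * r). split.
    { apply Rmult_lt_0_compat; auto. apply Rdiv_lt_0_compat. lra. apply pow_lt; lra. }
    assert (hcs : 4 * (k ^ 2 - B ^ 2) / A ^ 2 * cc A B k = 1) by (unfold cc; field; split; lra).
    split; [|split; [|lra]].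
    + set (s := 4 * (k ^ 2 - B ^ 2) / A ^ 2) in *.
      replace (s * r * cos (phi k)) with (s * (r * cos (phi k))) by ring.
      rewrite <- e1. rewrite Rmult_plus_distr_l, <- Rmult_assoc, hcs. ring.
    + set (s := 4 * (k ^ 2 - B ^ 2) / A ^ 2) in *.
      replace (s * r * sin (phi k)) with (s * (r * sin (phi k))) by ring.
      rewrite <- e2. rewrite <- Rmult_assoc, hcs. ring.
Qed.


Lemma small5 a b c d e : 0 < a -> 0 < b -> 0 < c -> 0 < d -> 0 < e ->
  exists x, 0 < x /\ x < a /\ x < b /\ x < c /\ x < d /\ x < e.
Proof.
  intros. exists (Rmin a (Rmin b (Rmin c (Rmin d e))) / 2).
  assert (h1 := Rmin_l a (Rmin b (Rmin c (Rmin d e)))).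
  assert (h2 := Rmin_r a (Rmin b (Rmin c (Rmin d e)))).
  assert (h3 := Rmin_l b (Rmin c (Rmin d e))).
  assert (h4 := Rmin_r b (Rmin c (Rmin d e))).
  assert (h5 := Rmin_l c (Rmin d e)). assert (h6 := Rmin_r c (Rmin d e)).
  assert (h7 := Rmin_l d e). assert (h8 := Rmin_r d e).
  assert (0 < Rmin a (Rmin b (Rmin c (Rmin d e)))).
  { repeat (apply Rmin_glb_lt; auto). }
  repeat split; lra.
Qed.

Lemma sinpos_R A B RR phi k : Hyps A B RR phi -> - Rabs B < k < 0 -> 0 < sin (phi k).
Proof.
  intros [hA [hR [hB hphi]]] hk.
  assert (hb := b_pos B RR (proj1 hB) hR).
  assert (hk2 : k ^ 2 - B ^ 2 < 0).
  { rewrite (Bsq B). assert (0 < (k + Rabs B) * (Rabs B - k)) by (apply Rmult_lt_0_compat; lra). nra. }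
  destruct (arg_real A B RR k _ ltac:(lra) (proj1 (proj1 (proj2 hphi) k hk))) as [r [hr [_ e2]]].
  assert (hc : cc A B k < 0).
  { unfold cc. unfold Rdiv. apply Rmult_lt_0_compat with (r1 := A^2) in hk2 || idtac.
    assert (0 < A ^ 2) by (apply pow_lt; lra).
    assert (/ (4 * (k ^ 2 - B ^ 2)) < 0) by (apply Rinv_lt_0_compat; lra). nra. }
  assert (hs : sin (4 * k * RR) < 0) by (apply sin_lt_0_var; nra).
  assert (0 < r * sin (phi k)) by nra. nra.
Qed.

Lemma right_branch A B RR phi n : Hyps A B RR phi ->
  (2 * INR n - 1) * PI / Rcrit A B < RR ->
  RR < (2 * INR n + 1) * PI / Rcrit A B ->
  forall k, - Rabs B < k < 0 -> 2 * PI * INR n < phi k < 2 * PI * INR n + PI.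
Proof.
  intros H hn1 hn2.
  assert (H' := H). destruct H' as [hA [hR [hB hphi]]].
  assert (hp := PI_RGT_0). assert (hb := b_pos B RR (proj1 hB) hR).
  set (th := 4 * Rabs B * RR) in *.
  set (de := Rmin th (PI - th) / 2).
  assert (hde : 0 < de /\ de < th /\ de < PI - th).
  { unfold de. assert (h1 := Rmin_l th (PI - th)). assert (h2 := Rmin_r th (PI - th)).
    assert (0 < Rmin th (PI - th)) by (apply Rmin_glb_lt; lra). lra. }
  assert (hl := left_lim A B RR phi n H hn1 hn2). fold th in hl.
  assert (hP : locally (2 * PI * INR n - th) (fun v => Rabs (v - (2 * PI * INR n - th)) < de)).
  { exists (mkposreal de (proj1 hde)). intros v hv. apply hv. }
  destruct (hl _ hP) as [eta heta].
  destruct hphi as [hL [hRg [_ [eps0 [heps0 hsemi]]]]].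
  assert (hA2 : 0 < A ^ 2) by (apply pow_lt; lra).
  destruct (small5 eps0 (Rabs B / 2) (1 / (16 * RR)) (A ^ 2 / (80 * Rabs B)) eta) as
     [eps [he [he1 [he2 [he3 [he4 he5]]]]]]; try lra.
  { apply Rdiv_lt_0_compat; lra. } { apply Rdiv_lt_0_compat; lra. } { apply cond_pos. }
  destruct (hsemi eps (conj he he1)) as [psi [hpsi [hp0 hpPI]]].
  assert (h4 : 4 * RR * eps <= 1/2).
  { assert (eps * (16 * RR) < 1) by (apply Rmult_lt_reg_r with (/ (16 * RR)); [apply Rinv_0_lt_compat; lra|];
       rewrite Rmult_assoc, Rinv_r, Rmult_1_r, Rmult_1_l; lra). lra. }
  assert (h40 : 40 * Rabs B * eps < A ^ 2).
  { assert (eps * (80 * Rabs B) < A ^ 2) by (apply Rmult_lt_reg_r with (/ (80 * Rabs B)); [apply Rinv_0_lt_compat; lra|];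
       rewrite Rmult_assoc, Rinv_r, Rmult_1_r; lra). nra. }
  assert (hsa := semi_arg A B RR eps psi hA hR hb he ltac:(lra) h4 h40 hpsi).
  rewrite hp0, hpPI in hsa.
  assert (hm : Rabs (phi (- Rabs B - eps) - (2 * PI * INR n - th)) < de).
  { apply heta. change (Rabs (- Rabs B - eps - - Rabs B) < eta).
    replace (- Rabs B - eps - - Rabs B) with (- eps) by ring. rewrite Rabs_Ropp, Rabs_pos_eq; lra. lra. }
  apply Rabs_def2 in hm. destruct hm as [hm1 hm2].
  set (ks := - Rabs B + eps).
  assert (hks : - Rabs B < ks < 0) by (unfold ks; lra).
  destruct (red_arg (phi ks)) as [q hq].
  destruct (sin_pos_strip _ q hq (sinpos_R A B RR phi ks H hks)) as [hq1 hq2].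
  assert (hqn : q = Z.of_nat n).
  { rewrite INR_Z in *.
    assert (PI * (2 * IZR q) < PI * (2 * IZR (Z.of_nat n) + 2)) by (unfold ks in *; lra).
    assert (PI * (2 * IZR (Z.of_nat n) - 1) < PI * (2 * IZR q + 1)) by (unfold ks in *; lra).
    apply piZ_lt in H0. apply piZ_lt in H1.
    assert (IZR q < IZR (Z.of_nat n + 1)) by (rewrite plus_IZR; simpl; lra).
    assert (IZR (Z.of_nat n - 1) < IZR q) by (rewrite minus_IZR; simpl; lra).
    apply lt_IZR in H2. apply lt_IZR in H3. lia. }
  subst q. rewrite <- INR_Z in hq1, hq2.
  intros k hk.
  apply (strip_transfer phi (fun x => - Rabs B < x < 0) _ _ ks k).
  - intros x hx. unfold Rmin, Rmax in hx. destruct Rle_dec; lra.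
  - intros x hx. apply (hRg x hx).
  - intros x hx e. assert (hs := sinpos_R A B RR phi x H hx). rewrite e, INR_Z, sin_2q in hs. lra.
  - intros x hx e. assert (hs := sinpos_R A B RR phi x H hx).
    replace (2 * PI * INR n + PI) with (PI + 2 * PI * IZR (Z.of_nat n)) in e by (rewrite INR_Z; ring).
    rewrite e, sin_pi_2q in hs. lra.
  - lra.
Qed.


Lemma right_lim A B RR phi n : Hyps A B RR phi ->
  (2 * INR n - 1) * PI / Rcrit A B < RR ->
  RR < (2 * INR n + 1) * PI / Rcrit A B ->
  filterlim phi (at_right (- Rabs B)) (locally (2 * PI * INR n + PI - 4 * Rabs B * RR)).
Proof.
  intros H hn1 hn2.
  assert (H' := H). destruct H' as [hA [hR [hB hphi]]].
  assert (hp := PI_RGT_0). assert (hb := b_pos B RR (proj1 hB) hR).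
  assert (hrb := right_branch A B RR phi n H hn1 hn2).
  apply (lim_polar phi (fun k => 4 * (B ^ 2 - k ^ 2) / A ^ 2 - cos (4 * k * RR))
            (fun k => - sin (4 * k * RR)) (2 * PI * INR n + PI / 2) (- Rabs B) _ _ (Rabs B)).
  - reg.
  - reg.
  - exists 1. split. lra. rewrite (Bsq B).
    replace (4 * (Rabs B ^ 2 - (- Rabs B) ^ 2) / A ^ 2) with 0 by (field; lra).
    replace (2 * PI * INR n + PI - 4 * Rabs B * RR) with ((4 * (- Rabs B) * RR + PI) + 2 * INR n * PI) by ring.
    rewrite cos_period, sin_period, neg_cos, neg_sin. split; ring.
  - lra.
  - lra.
  - intros k hk hD.
    assert (hk' : - Rabs B < k < 0) by (apply Rabs_def2 in hk; lra).
    assert (hk2 : k ^ 2 - B ^ 2 < 0).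
    { rewrite (Bsq B). assert (0 < (k + Rabs B) * (Rabs B - k)) by (apply Rmult_lt_0_compat; lra). nra. }
    destruct (arg_real A B RR k _ ltac:(lra) (proj1 (proj1 (proj2 hphi) k hk'))) as [r [hr [e1 e2]]].
    exists (4 * (B ^ 2 - k ^ 2) / A ^ 2 * r). split.
    { apply Rmult_lt_0_compat; auto. apply Rdiv_lt_0_compat. lra. apply pow_lt; lra. }
    assert (hcs : 4 * (B ^ 2 - k ^ 2) / A ^ 2 * cc A B k = -1) by (unfold cc; field; split; lra).
    assert (hh := hrb k hk').
    split; [|split; [|lra]].
    + set (s := 4 * (B ^ 2 - k ^ 2) / A ^ 2) in *.
      replace (s * r * cos (phi k)) with (s * (r * cos (phi k))) by ring.
      rewrite <- e1. rewrite Rmult_plus_distr_l, <- Rmult_assoc, hcs. ring.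
    + set (s := 4 * (B ^ 2 - k ^ 2) / A ^ 2) in *.
      replace (s * r * sin (phi k)) with (s * (r * sin (phi k))) by ring.
      rewrite <- e2. rewrite <- Rmult_assoc, hcs. ring.
Qed.

Lemma zero_lim A B RR phi n L : Hyps A B RR phi ->
  (2 * INR n - 1) * PI / Rcrit A B < RR ->
  RR < (2 * INR n + 1) * PI / Rcrit A B ->
  (exists rho, 0 < rho /\ 1 - A ^ 2 / (4 * B ^ 2) = rho * cos L /\ 0 = rho * sin L) ->
  2 * PI * INR n - PI / 2 < L < 2 * PI * INR n + 3 * PI / 2 ->
  filterlim phi (at_left 0) (locally L).
Proof.
  intros H hn1 hn2 hL hL2.
  assert (H' := H). destruct H' as [hA [hR [hB hphi]]].
  assert (hp := PI_RGT_0). assert (hb := b_pos B RR (proj1 hB) hR).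
  assert (hB2 : 0 < B ^ 2) by (rewrite (Bsq B); apply pow_lt; lra).
  assert (hrb := right_branch A B RR phi n H hn1 hn2).
  apply (lim_polar phi (fun k => 1 + A ^ 2 / (4 * (k ^ 2 - B ^ 2)) * cos (4 * k * RR))
            (fun k => A ^ 2 / (4 * (k ^ 2 - B ^ 2)) * sin (4 * k * RR)) (2 * PI * INR n + PI / 2) 0 _ _ (Rabs B)).
  - reg. lra.
  - reg. lra.
  - destruct hL as [rho [h1 [h2 h3]]]. exists rho. split; auto.
    replace (4 * 0 * RR) with 0 by ring. rewrite cos_0, sin_0.
    split. rewrite <- h2. field. intro e; rewrite e in hB2; simpl in hB2; lra. rewrite <- h3. ring.
  - lra.
  - lra.
  - intros k hk hD.
    assert (hk' : - Rabs B < k < 0) by (rewrite Rminus_0_r in hk; apply Rabs_def2 in hk; lra).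
    assert (hk2 : k ^ 2 - B ^ 2 < 0).
    { rewrite (Bsq B). assert (0 < (k + Rabs B) * (Rabs B - k)) by (apply Rmult_lt_0_compat; lra). nra. }
    destruct (arg_real A B RR k _ ltac:(lra) (proj1 (proj1 (proj2 hphi) k hk'))) as [r [hr [e1 e2]]].
    exists r. unfold cc in *. assert (hh := hrb k hk'). repeat split; auto; lra.
Qed.


Lemma Rcrit_pos A B : 0 < A -> 0 < Rcrit A B.
Proof. intro. unfold Rcrit. assert (0 < sqrt (4 * B ^ 2 + A ^ 2)). apply sqrt_lt_R0.
  assert (0 < A ^ 2) by (apply pow_lt; lra). assert (0 <= B ^ 2) by (rewrite <- Rsqr_pow2; apply Rle_0_sqr). lra. lra. Qed.

Lemma hn1_0 A B RR : 0 < A -> 0 < RR -> (2 * INR 0 - 1) * PI / Rcrit A B < RR.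
Proof.
  intros. simpl. assert (hp := PI_RGT_0). assert (h := Rcrit_pos A B H).
  assert ((2 * 0 - 1) * PI / Rcrit A B < 0). { unfold Rdiv. apply Rmult_neg_pos. nra. apply Rinv_0_lt_compat; lra. } lra.
Qed.

Lemma omega_val B RR n m : (m <= n)%nat -> omega B RR n m = Finite (W B RR m).
Proof.
  intro h. unfold omega. destruct m. reflexivity.
  simpl Nat.eqb. replace (Nat.ltb n (S m)) with false. reflexivity.
  symmetry. apply Nat.ltb_ge. lia.
Qed.

Lemma rho_pos A B : 0 < B ^ 2 -> 4 * B ^ 2 - A ^ 2 > 0 -> 0 < 1 - A ^ 2 / (4 * B ^ 2).
Proof. intros. assert (B <> 0) by (intro e; rewrite e in H; simpl in H; lra).
  replace (1 - A ^ 2 / (4 * B ^ 2)) with ((4 * B ^ 2 - A ^ 2) / (4 * B ^ 2)) by (field; auto).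
  apply Rdiv_lt_0_compat; lra. Qed.

Lemma rho_neg A B : 0 < B ^ 2 -> 4 * B ^ 2 - A ^ 2 < 0 -> 1 - A ^ 2 / (4 * B ^ 2) < 0.
Proof. intros. assert (B <> 0) by (intro e; rewrite e in H; simpl in H; lra).
  replace (1 - A ^ 2 / (4 * B ^ 2)) with ((4 * B ^ 2 - A ^ 2) * / (4 * B ^ 2)) by (field; auto).
  apply Rmult_neg_pos. lra. apply Rinv_0_lt_compat; lra. Qed.

Theorem proposition6 (A B RR : R) (phi : R -> R) :
  0 < A -> 0 < RR -> 0 < 4 * Rabs B * RR < PI ->
  is_phi A B RR phi ->
  (* 1) *)
  (RR < PI / Rcrit A B ->
     (forall k, k < - Rabs B -> - PI < phi k < PI) /\
     (exists theta, 0 < theta < PI /\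
        filterlim phi (at_left (- Rabs B)) (locally (- theta)) /\
        filterlim phi (at_right (- Rabs B)) (locally (PI - theta))) /\
     (forall k, - Rabs B < k < 0 -> 0 < phi k < PI)) /\
  (* 2) *)
  (forall n : nat, (1 <= n)%nat ->
     (2 * INR n - 1) * PI / Rcrit A B < RR < (2 * INR n + 1) * PI / Rcrit A B ->
     (forall j : nat, (1 <= j <= n)%nat ->
        phi (- (2 * INR (n - j + 1) - 1) * PI / (4 * RR)) = (2 * INR j - 1) * PI) /\
     (forall j : nat, (j <= n)%nat -> forall k,
        Rbar_lt (omega B RR n (n - j + 1)) (Finite k) ->
        Rbar_lt (Finite k) (omega B RR n (n - j)) ->
        2 * PI * INR j - PI < phi k < 2 * PI * INR j + PI) /\
     (exists theta, 0 < theta < PI /\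
        filterlim phi (at_left (- Rabs B)) (locally (2 * PI * INR n - theta)) /\
        filterlim phi (at_right (- Rabs B)) (locally (2 * PI * INR n + PI - theta))) /\
     (forall k, - Rabs B < k < 0 -> 2 * PI * INR n < phi k < 2 * PI * INR n + PI)) /\
  (* 3) *)
  (4 * B ^ 2 - A ^ 2 > 0 ->
     (RR < PI / Rcrit A B -> filterlim phi (at_left 0) (locally 0)) /\
     (forall n : nat, (1 <= n)%nat ->
        (2 * INR n - 1) * PI / Rcrit A B < RR < (2 * INR n + 1) * PI / Rcrit A B ->
        filterlim phi (at_left 0) (locally (2 * PI * INR n)))) /\
  (4 * B ^ 2 - A ^ 2 < 0 ->
     (RR < PI / Rcrit A B -> filterlim phi (at_left 0) (locally PI)) /\
     (forall n : nat, (1 <= n)%nat ->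
        (2 * INR n - 1) * PI / Rcrit A B < RR < (2 * INR n + 1) * PI / Rcrit A B ->
        filterlim phi (at_left 0) (locally (2 * PI * INR n + PI)))).
Proof.
  intros hA hR hB hphi.
  assert (H : Hyps A B RR phi) by exact (conj hA (conj hR (conj hB hphi))).
  assert (hp := PI_RGT_0). assert (hb := b_pos B RR (proj1 hB) hR).
  assert (hB2 : 0 < B ^ 2) by (rewrite (Bsq B); apply pow_lt; lra).
  assert (h0 : forall x, (2 * INR 0 + 1) * PI / Rcrit A B = x -> PI / Rcrit A B = x)
    by (intros x e; rewrite <- e; simpl; f_equal; ring).
  assert (hn0 : RR < PI / Rcrit A B -> RR < (2 * INR 0 + 1) * PI / Rcrit A B)
    by (intro; replace ((2 * INR 0 + 1) * PI) with PI by (simpl; ring); auto).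
  assert (hn10 := hn1_0 A B RR hA hR).
  split; [|split; [|split]].
  -
    intro hr. assert (hn2 := hn0 hr). split; [|split].
    + intros k hk. destruct (strips_all A B RR phi 0 H hn10 hn2 0 (le_n 0)) as [hs _].
      assert (hh := hs k (conj (or_introl eq_refl) hk)). simpl in hh. lra.
    + exists (4 * Rabs B * RR). split. lra. split.
      * assert (h := left_lim A B RR phi 0 H hn10 hn2). simpl INR in h.
        replace (2 * PI * 0 - 4 * Rabs B * RR) with (- (4 * Rabs B * RR)) in h by ring. exact h.
      * assert (h := right_lim A B RR phi 0 H hn10 hn2). simpl INR in h.
        replace (2 * PI * 0 + PI - 4 * Rabs B * RR) with (PI - 4 * Rabs B * RR) in h by ring. exact h.
    + intros k hk. assert (h := right_branch A B RR phi 0 H hn10 hn2 k hk). simpl INR in h. lra.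
  -
    intros n hn [hn1 hn2]. split; [|split; [|split]].
    + intros j hj. destruct (strips_all A B RR phi n H hn1 hn2 n (le_n n)) as [_ hv].
      assert (h := hv (j - 1)%nat ltac:(lia)).
      replace (n - (j - 1))%nat with (S (n - j)) in h by lia.
      replace (n - j + 1)%nat with (S (n - j)) by lia.
      rewrite minus_INR in h by lia. simpl INR in h.
      unfold W in h. rewrite h. ring.
    + intros j hj k h1 h2.
      destruct (strips_all A B RR phi n H hn1 hn2 j hj) as [hs _].
      apply hs. split.
      * destruct j as [|j']. left; auto. right.
        rewrite omega_val in h1 by lia. exact h1.
      * rewrite omega_val in h2 by lia. exact h2.
    + exists (4 * Rabs B * RR). split. lra. split.
      * apply (left_lim A B RR phi n H hn1 hn2).
      * apply (right_lim A B RR phi n H hn1 hn2).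
    + apply (right_branch A B RR phi n H hn1 hn2).
  -
    intro hAB. assert (hrho := rho_pos A B hB2 hAB). split.
    + intro hr. apply (zero_lim A B RR phi 0 0 H hn10 (hn0 hr)).
      * exists (1 - A ^ 2 / (4 * B ^ 2)). rewrite cos_0, sin_0. repeat split; auto; ring.
      * simpl. lra.
    + intros n hn [hn1 hn2]. apply (zero_lim A B RR phi n _ H hn1 hn2).
      * exists (1 - A ^ 2 / (4 * B ^ 2)). rewrite INR_Z, cos_2q, sin_2q. repeat split; auto; ring.
      * lra.
  - intro hAB. assert (hrho := rho_neg A B hB2 hAB). split.
    + intro hr. apply (zero_lim A B RR phi 0 PI H hn10 (hn0 hr)).
      * exists (- (1 - A ^ 2 / (4 * B ^ 2))). rewrite cos_PI, sin_PI. repeat split; try lra; ring.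
      * simpl. lra.
    + intros n hn [hn1 hn2]. apply (zero_lim A B RR phi n _ H hn1 hn2).
      * exists (- (1 - A ^ 2 / (4 * B ^ 2))).
        replace (2 * PI * INR n + PI) with (PI + 2 * PI * IZR (Z.of_nat n)) by (rewrite INR_Z; ring).
        rewrite cos_pi_2q, sin_pi_2q. repeat split; try lra; ring.
      * lra.
Qed.
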